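(* Let $\mathcal{M}$ be a minimally $k$-level matroid on ground set $E$ and $F$ a $k$-level flacet of $\mathcal{M}$. Then $\overline{F}:=E\setminus F$ satisfies $\operatorname{rk}(\overline{F})=|\overline{F}|$, i.e. $\overline{F}$ is independent.
   Context: Levelness of a matroid $\mathcal{M}=(E,\mathcal{B})$: the least $k$ such that every facet-defining affine function takes at most $k$ distinct values on $V_{\mathcal{M}}=\{\mathbf{1}_B:B\in\mathcal{B}\}$ (facets are inclusion-maximal faces $\{v\in V_{\mathcal{M}}:\ell(v)=0\}\neq V_{\mathcal{M}}$ for affine $\ell\ge0$ on $V_{\mathcal{M}}$). $\mathcal{M}$ is minimally $k$-level if its levelness is $k$ and every proper minor has strictly smaller levelness. A flacet is a flat $\emptyset\neq S\subsetneq E$ such that the restriction $\mathcal{M}|_S$ and contraction $\mathcal{M}/S$ are connected; a flacet $F$ is $k$-level if $\ell_F(x)=\sum_{e\in F}x_e$ takes exactly $k$ distinct values on $V_{\mathcal{M}}$. *)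

(* Defs.v *)
From HB Require Import structures.
From mathcomp Require Import all_boot all_order all_algebra.
From mathcomp Require Import reals.
Set Implicit Arguments. Unset Strict Implicit. Unset Printing Implicit Defensive.
Import Order.TTheory GRing.Theory Num.Theory.
Local Open Scope ring_scope.

Section Matroids.
Variable T : finType.

Definition is_matroid (E : {set T}) (Bs : {set {set T}}) : Prop :=
  [/\ Bs != set0,
      (forall B, B \in Bs -> B \subset E) &
      (forall B1 B2 x, B1 \in Bs -> B2 \in Bs -> x \in B1 :\: B2 ->
         exists2 y, y \in B2 :\: B1 & (y |: (B1 :\ x)) \in Bs)].

Definition rk (Bs : {set {set T}}) (A : {set T}) : nat :=
  (\max_(B in Bs) #|A :&: B|)%N.

Definition indep (Bs : {set {set T}}) (A : {set T}) : Prop :=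
  exists2 B, B \in Bs & A \subset B.

Definition circuit (E : {set T}) (Bs : {set {set T}}) (C : {set T}) : Prop :=
  [/\ C \subset E, ~ indep Bs C & forall x, x \in C -> indep Bs (C :\ x)].

Definition connected (E : {set T}) (Bs : {set {set T}}) : Prop :=
  forall x y, x \in E -> y \in E -> x != y ->
    exists C, circuit E Bs C /\ x \in C /\ y \in C.

(* restriction M|S (S \subset E): ground set S *)
Definition restrict_bases (Bs : {set {set T}}) (S : {set T}) : {set {set T}} :=
  [set B :&: S | B in Bs & #|B :&: S| == rk Bs S].

(* contraction M/C (C \subset E): ground set E :\: C *)
Definition contract_bases (Bs : {set {set T}}) (C : {set T}) : {set {set T}} :=
  [set B :\: C | B in Bs & #|B :&: C| == rk Bs C].

Definition flat (E : {set T}) (Bs : {set {set T}}) (S : {set T}) : Prop :=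
  S \subset E /\ forall e, e \in E :\: S -> (rk Bs S < rk Bs (e |: S))%N.

Definition flacet (E : {set T}) (Bs : {set {set T}}) (S : {set T}) : Prop :=
  [/\ flat E Bs S, S != set0, S \proper E,
      connected S (restrict_bases Bs S) &
      connected (E :\: S) (contract_bases Bs S)].

Variable R : realType.

(* the vertex 1_B of the base polytope *)
Definition ind (B : {set T}) : T -> R := fun e => (e \in B)%:R.

Definition aff (E : {set T}) (a : T -> R) (b : R) (v : T -> R) : R :=
  \sum_(e in E) a e * v e + b.

Definition nvalues (E : {set T}) (Bs : {set {set T}}) (a : T -> R) (b : R) : nat :=
  size (undup [seq aff E a b (ind B) | B <- enum Bs]).

Definition nonneg_on (E : {set T}) (Bs : {set {set T}}) (a : T -> R) (b : R) : Prop :=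
  forall B, B \in Bs -> 0 <= aff E a b (ind B).

(* zero set of l on V_M, identified with a subset of the bases *)
Definition zeroset (E : {set T}) (Bs : {set {set T}}) (a : T -> R) (b : R) : {set {set T}} :=
  [set B in Bs | aff E a b (ind B) == 0].

Definition face (E : {set T}) (Bs : {set {set T}}) (G : {set {set T}}) : Prop :=
  exists a b, nonneg_on E Bs a b /\ G = zeroset E Bs a b.

Definition facet (E : {set T}) (Bs : {set {set T}}) (G : {set {set T}}) : Prop :=
  [/\ face E Bs G, G != Bs &
      forall H, face E Bs H -> H != Bs -> G \subset H -> H = G].

Definition facet_defining (E : {set T}) (Bs : {set {set T}}) (a : T -> R) (b : R) : Prop :=
  nonneg_on E Bs a b /\ facet E Bs (zeroset E Bs a b).

Definition at_most_level (E : {set T}) (Bs : {set {set T}}) (k : nat) : Prop :=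
  forall a b, facet_defining E Bs a b -> (nvalues E Bs a b <= k)%N.

Definition levelness_is (E : {set T}) (Bs : {set {set T}}) (k : nat) : Prop :=
  at_most_level E Bs k /\ forall j, (j < k)%N -> ~ at_most_level E Bs j.

(* M is minimally k-level: levelness k and every proper minor M/C\D
   (C, D disjoint subsets of E, not both empty) has strictly smaller levelness *)
Definition minimally_level (E : {set T}) (Bs : {set {set T}}) (k : nat) : Prop :=
  levelness_is E Bs k /\
  forall C D : {set T}, C \subset E -> D \subset E -> [disjoint C & D] ->
    C :|: D != set0 ->
    exists2 j, (j < k)%N &
      levelness_is (E :\: (C :|: D))
        (restrict_bases (contract_bases Bs C) (E :\: (C :|: D))) j.

Definition flacet_level (E : {set T}) (Bs : {set {set T}}) (F : {set T}) (k : nat) : Prop :=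
  nvalues E Bs (fun e => (e \in F)%:R) 0 = k.

End Matroids.

(* Main.v *)
Require Import Defs.
From HB Require Import structures.
From mathcomp Require Import all_boot all_order all_algebra.
From mathcomp Require Import reals.
From Stdlib Require Import Classical Lia.
From mathcomp Require Import zify ring lra.

Module P1.
Set Implicit Arguments. Unset Strict Implicit. Unset Printing Implicit Defensive.

Section Gen.
Variable T : finType.
Implicit Types (S : {set {set T}}) (A B C I J K : {set T}).

Definition exch S := forall B1 B2 x, B1 \in S -> B2 \in S -> x \in B1 :\: B2 ->
  exists2 y, y \in B2 :\: B1 & (y |: (B1 :\ x)) \in S.

Lemma card_swap B x y : x \in B -> y \notin B -> #|y |: (B :\ x)| = #|B|.
Proof.
move=> xB yB; rewrite cardsU1 inE negb_and (negbTE yB) orbT (cardsD1 x B) xB.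
by [].
Qed.

Lemma swapD B1 B2 w y : y \in B2 -> w \in B1 :\: B2 ->
  (y |: (B1 :\ w)) :\: B2 = (B1 :\: B2) :\ w.
Proof.
move=> yB2 wB; apply/setP=> u; rewrite !inE.
have [->|uy] := eqVneq u y; first by rewrite yB2 /= ?andbF.
by case: (u \in B2); case: (u == w); case: (u \in B1).
Qed.

Lemma incomparable S B1 B2 : exch S -> B1 \in S -> B2 \in S -> B1 \subset B2 -> B1 = B2.
Proof.
move=> hS h1 h2 sub; apply/eqP; rewrite eqEsubset sub /=.
apply/subsetP=> y yB2; apply/negPn/negP=> yB1.
have yD : y \in B2 :\: B1 by rewrite inE yB1 yB2.
have [z] := hS B2 B1 y h2 h1 yD.
rewrite inE => /andP[zB2 zB1] _.
by rewrite (subsetP sub z zB1) in zB2.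
Qed.

Lemma equicard S B1 B2 : exch S -> B1 \in S -> B2 \in S -> #|B1| = #|B2|.
Proof.
move=> hS h1 h2.
suff: forall n B, B \in S -> #|B :\: B2| = n -> #|B| = #|B2| by move/(_ _ B1 h1 erefl).
elim=> [|n IH] B hB hn.
  have: B :\: B2 == set0 by rewrite -cards_eq0 hn.
  by rewrite setD_eq0 => /(incomparable hS hB h2) ->.
have [w wB] : exists w, w \in B :\: B2.
  by apply/set0Pn; rewrite -card_gt0 hn.
have [y yB2 hB'] := hS B B2 w hB h2 wB.
move: yB2 wB; rewrite !inE => /andP[yB yB2] /andP[wB2 wB].
rewrite -(card_swap wB yB); apply: IH => //.
rewrite swapD //; last by rewrite inE wB2 wB.
move: hn; rewrite (cardsD1 w (B :\: B2)) inE wB2 wB /=.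
by case.
Qed.

Lemma augment S I J : exch S -> indep S I -> indep S J -> #|I| < #|J| ->
  exists2 z, z \in J :\: I & indep S (z |: I).
Proof.
move=> hS [BI hBI sI] [BJ hBJ sJ] lt.
apply: NNPP => H.
have H' : forall z, z \in J :\: I -> ~ indep S (z |: I).
  by move=> z zJ hz; apply: H; exists z.
suff: forall n B, B \in S -> I \subset B -> #|B :\: BJ| = n -> False
  by move/(_ _ BI hBI sI erefl).
elim=> [|n IH] B hB sIB hn.
- have: B :\: BJ == set0 by rewrite -cards_eq0 hn.
  rewrite setD_eq0 => sB.
  have eB := incomparable hS hB hBJ sB.
  have [z zJI] : exists z, z \in J :\: I.
    apply/set0Pn; rewrite -card_gt0.
    have := cardsID I J; have := subset_leq_card (subsetIr J I); lia.
  apply: (H' z zJI); exists BJ => //.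
  apply/subsetP=> u; rewrite !inE => /orP[/eqP->|uI].
    by move: zJI; rewrite inE => /andP[_ /(subsetP sJ)].
  by rewrite -eB (subsetP sIB).
- case: (boolP [exists w, w \in B :\: (I :|: BJ)]) => [/existsP[w wB]|/existsPn nw].
  + move: wB; rewrite !inE negb_or => /andP[/andP[wI wBJ] wB].
    have wD : w \in B :\: BJ by rewrite inE wBJ wB.
    have [y yBJ hB'] := hS B BJ w hB hBJ wD.
    apply: (IH _ hB').
      apply/subsetP=> u uI; rewrite !inE (subsetP sIB) // andbT.
      by apply/orP; right; apply/eqP=> eu; rewrite -eu uI in wI.
    have yBJ' : y \in BJ by move: yBJ; rewrite inE => /andP[].
    rewrite (swapD yBJ' wD).
    by move: hn; rewrite (cardsD1 w (B :\: BJ)) inE wBJ wB /=; case.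
  +
    have s1 : B :\: I \subset BJ :\: J.
      apply/subsetP=> u; rewrite !inE => /andP[uI uB].
      have := nw u; rewrite !inE (negbTE uI) uB /= andbT negbK => uBJ.
      rewrite uBJ andbT; apply/negP=> uJ; apply: (H' u); first by rewrite inE uI uJ.
      exists B => //; apply/subsetP=> v; rewrite !inE => /orP[/eqP->//|vI].
      exact: (subsetP sIB).
    have e1 := cardsID I B; have e2 := cardsID J BJ.
    move: e1 e2; rewrite (setIidPr sIB) (setIidPr sJ) => e1 e2.
    have := subset_leq_card s1; have := equicard hS hB hBJ; lia.
Qed.


Lemma aug_star S I J : exch S -> indep S I -> indep S J ->
  exists I', [/\ indep S I', I \subset I', I' \subset I :|: J & #|J| <= #|I'|].
Proof.
move=> hS hI hJ.
suff: forall n I, indep S I -> #|J| - #|I| <= n ->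
  exists I', [/\ indep S I', I \subset I', I' \subset I :|: J & #|J| <= #|I'|].
  by move/(_ _ I hI (leqnn _)).
elim=> [|n IH] {}I {}hI hn.
  exists I; split=> //; [exact: subsetUl | lia].
case: (leqP #|J| #|I|) => hle.
  exists I; split=> //; exact: subsetUl.
have [z zJI hz] := augment hS hI hJ hle.
move: zJI; rewrite inE => /andP[zI zJ].
have hn' : #|J| - #|z |: I| <= n by rewrite cardsU1 zI; lia.
have [I' [h1 h2 h3 h4]] := IH (z |: I) hz hn'.
exists I'; split=> //.
  by apply: subset_trans h2; exact: subsetUr.
apply: (subset_trans h3); apply/subsetP=> u; rewrite !inE.
by case/orP=> [/orP[/eqP->|->]|->]; rewrite ?zJ ?orbT.
Qed.

Lemma indep_basis S I B : exch S -> indep S I -> B \in S -> #|B| <= #|I| -> I \in S.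
Proof.
move=> hS [B' hB' sI] hB le.
have eq : #|B'| = #|B| := equicard hS hB' hB.
suff -> : I = B' by [].
by apply/eqP; rewrite eqEcard sI eq.
Qed.

Lemma circuit_exch S E0 C x y : exch S -> circuit E0 S C -> x \in C -> y \in C -> x != y ->
  exists2 B, B \in S & [/\ x \in B, y \notin B & y |: (B :\ x) \in S].
Proof.
move=> hS [_ ndep hmin] xC yC xy.
have [B hB sB] := hmin y yC.
have hB' : indep S B by exists B.
have [I' [h1 h2 h3 h4]] := aug_star hS (hmin x xC) hB'.
have I'S := indep_basis hS h1 hB h4.
have xB : x \in B by apply: (subsetP sB); rewrite !inE xy.
have yB : y \notin B.
  apply/negP=> yB; apply: ndep; exists B => //; apply/subsetP=> u uC.
  have [->//|uy] := eqVneq u y; apply: (subsetP sB); by rewrite !inE uy.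
have xI' : x \notin I'.
  apply/negP=> xI; apply: ndep; exists I' => //; apply/subsetP=> u uC.
  have [->//|ux] := eqVneq u x; apply: (subsetP h2); by rewrite !inE ux.
exists B => //; split=> //.
suff -> : y |: (B :\ x) = I' by [].
apply/esym/eqP; rewrite eqEcard card_swap // h4 andbT.
apply/subsetP=> u uI; have := subsetP h3 u uI; rewrite !inE.
case/orP=> [/andP[ux uC]|uB].
  have [->|uy] := eqVneq u y; first by [].
  by rewrite ux (subsetP sB u) ?orbT // !inE uy uC.
have [eux|ux] := eqVneq u x; first by rewrite -eux uI in xI'.
by rewrite uB orbT.
Qed.

Lemma exch_ival S F B1 B2 v : exch S -> B1 \in S -> B2 \in S ->
  #|B1 :&: F| <= v <= #|B2 :&: F| -> exists2 B, B \in S & #|B :&: F| = v.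
Proof.
move=> hS h1 h2.
suff: forall n B, B \in S -> #|B :\: B2| = n -> #|B :&: F| <= v <= #|B2 :&: F| ->
  exists2 B, B \in S & #|B :&: F| = v by move/(_ _ B1 h1 erefl).
elim=> [|n IH] B hB hn /andP[lo hi].
  have: B :\: B2 == set0 by rewrite -cards_eq0 hn.
  rewrite setD_eq0 => /(incomparable hS hB h2) eB.
  by exists B2 => //; apply/eqP; rewrite eqn_leq hi -eB lo.
case: (ltnP #|B :&: F| v) => lt; last first.
  by exists B => //; apply/eqP; rewrite eqn_leq lo lt.
have [w wB] : exists w, w \in B :\: B2.
  by apply/set0Pn; rewrite -card_gt0 hn.
have [y yB2 hB'] := hS B B2 w hB h2 wB.
move: yB2 wB; rewrite !inE => /andP[yB yB2] /andP[wB2 wB].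
have wD : w \in B :\: B2 by rewrite inE wB2 wB.
apply: (IH _ hB').
  rewrite (swapD yB2 wD).
  by move: hn; rewrite (cardsD1 w (B :\: B2)) inE wB2 wB /=; case.
rewrite hi andbT.
have : #|(y |: B :\ w) :&: F| <= #|B :&: F| + 1.
  apply: (@leq_trans #|y |: (B :&: F)|).
    apply: subset_leq_card; apply/subsetP=> u; rewrite !inE.
    by case/andP=> /orP[->//|/andP[_ ->]] ->; rewrite orbT.
  by rewrite cardsU1; case: (y \notin _) => /=; lia.
lia.
Qed.

Inductive rtc (P : T -> T -> Prop) (x : T) : T -> Prop :=
| rtc_refl : rtc P x x
| rtc_step y z : rtc P x y -> P y z -> rtc P x z.

Lemma rtc_trans P x y z : rtc P x y -> rtc P y z -> rtc P x z.
Proof. move=> h1 h2; elim: h2 => // u v _ IH Puv; exact: rtc_step IH Puv. Qed.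

Lemma rtc1 P x y : P x y -> rtc P x y.
Proof. by move=> h; apply: rtc_step (rtc_refl _ _) h. Qed.

Lemma rtc_sym P x y : (forall u v, P u v -> P v u) -> rtc P x y -> rtc P y x.
Proof.
move=> sP h; elim: h => [|u v _ IH Puv]; first exact: rtc_refl.
exact: rtc_trans (rtc1 (sP _ _ Puv)) IH.
Qed.

Lemma rtc_map P Q x y : (forall u v, P u v -> u != v -> Q u v) -> rtc P x y -> rtc Q x y.
Proof.
move=> hPQ h; elim: h => [|u v _ IH Puv]; first exact: rtc_refl.
have [<-//|uv] := eqVneq u v.
exact: rtc_step IH (hPQ _ _ Puv uv).
Qed.

Lemma tutte (D : {set T}) (Pd Pc : T -> T -> Prop) :
  (forall u v, Pd u v -> Pd v u) -> (forall u v, Pc u v -> Pc v u) ->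
  (forall u v, u \in D -> v \in D -> u != v -> Pd u v \/ Pc u v) ->
  (forall u v, u \in D -> v \in D -> rtc Pc u v) \/
  (forall u v, u \in D -> v \in D -> rtc Pd u v).
Proof.
move=> sd sc H.
case: (classic (forall u v, u \in D -> v \in D -> rtc Pc u v)) => [h|h]; [by left|right].
move=> x y xD yD; apply: NNPP => nxy.
apply: h => x0 y0 x0D y0D.
have hw : forall w, w \in D -> rtc Pc w x.
  move=> w wD.
  have [->|wx] := eqVneq w x; first exact: rtc_refl.
  have [ey|wy] := eqVneq w y.
    have [->|xy] := eqVneq x y; first by rewrite -ey; exact: rtc_refl.
    case: (H x y xD yD xy) => [hd|hc]; first by case: nxy; exact: rtc1.
    by rewrite ey; apply: rtc1; exact: sc.
  case: (H w x wD xD wx) => [hd|hc]; last exact: rtc1.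
  case: (H w y wD yD wy) => [hd'|hc'].
    by case: nxy; apply: rtc_trans (rtc1 (sd _ _ hd)) (rtc1 hd').
  have [->|xy] := eqVneq x y; first exact: rtc1.
  case: (H x y xD yD xy) => [hd2|hc2]; first by case: nxy; exact: rtc1.
  exact: rtc_trans (rtc1 hc') (rtc1 (sc _ _ hc2)).
exact: rtc_trans (hw _ x0D) (rtc_sym sc (hw _ y0D)).
Qed.

End Gen.

End P1.
Import P1.

Module P2.
Set Implicit Arguments. Unset Strict Implicit. Unset Printing Implicit Defensive.
Import Order.TTheory GRing.Theory Num.Theory.

Section Real.
Variable R : realType.
Variable T : finType.
Implicit Types (S : {set {set T}}) (A B C I J K : {set T}).
Local Open Scope ring_scope.

Lemma sum_ind (E' B : {set T}) (a : T -> R) : B \subset E' ->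
  \sum_(e in E') a e * ind R B e = \sum_(e in B) a e.
Proof.
move=> sB.
rewrite (eq_bigr (fun e => if e \in B then a e else 0)); last first.
  by move=> e _; rewrite /ind; case: (e \in B); rewrite ?mulr1 ?mulr0.
rewrite -big_mkcondr; apply: eq_bigl => e.
by case eB: (e \in B); rewrite ?andbT ?andbF // (subsetP sB).
Qed.

Lemma aff_ind (E' B : {set T}) a b : B \subset E' ->
  aff E' a b (ind R B) = \sum_(e in B) a e + b.
Proof. by move=> sB; rewrite /aff sum_ind. Qed.

Lemma sum_indF (B F : {set T}) : \sum_(e in B) ((e \in F)%:R : R) = #|B :&: F|%:R.
Proof.
rewrite (eq_bigr (fun e => if e \in F then 1 else 0)); last first.
  by move=> e _; case: (e \in F).
rewrite -big_mkcondr.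
rewrite (eq_bigl (fun e => e \in B :&: F)); last by move=> e; rewrite inE.
by rewrite sumr_const.
Qed.

Lemma nvalues_le (E1 E2 : {set T}) S1 S2 a1 b1 a2 b2 (phi : R -> R) :
  injective phi ->
  (forall B1, B1 \in S1 -> exists2 B2, B2 \in S2 &
     aff E2 a2 b2 (ind R B2) = phi (aff E1 a1 b1 (ind R B1))) ->
  (nvalues E1 S1 a1 b1 <= nvalues E2 S2 a2 b2)%N.
Proof.
move=> iphi H; rewrite /nvalues.
rewrite -(size_map phi); apply: uniq_leq_size.
  by rewrite (map_inj_uniq iphi) undup_uniq.
move=> v /mapP[w + ->]; rewrite mem_undup => /mapP[B1 + ->].
rewrite mem_enum => h1; have [B2 h2 e2] := H B1 h1.
by rewrite mem_undup; apply/mapP; exists B2; rewrite ?mem_enum.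
Qed.

Lemma nvalues_gt0 (E' : {set T}) S (a : T -> R) (b : R) : S != set0 -> (0 < nvalues E' S a b)%N.
Proof.
case/set0Pn=> B hB; rewrite /nvalues.
have : aff E' a b (ind R B) \in undup [seq aff E' a b (ind R B0) | B0 <- enum S].
  by rewrite mem_undup; apply/mapP; exists B; rewrite ?mem_enum.
by case: (undup _).
Qed.

Lemma facet_exists (E' : {set T}) S : S != set0 -> exists a b, @facet_defining T R E' S a b.
Proof.
move=> hS.
suff: forall n G, face R E' S G -> G != S -> (#|S| - #|G| <= n)%N -> exists G', facet R E' S G'.
  move=> H.
  have f0 : face R E' S set0.
    exists (fun _ => 0), 1; split.
      by move=> B _; rewrite /aff big1 ?add0r ?ler01 // => e _; rewrite mul0r.
    apply/setP=> B; rewrite !inE /aff big1 ?add0r ?oner_eq0 ?andbF // => e _.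
    by rewrite mul0r.
  have n0 : set0 != S by rewrite eq_sym.
  have [G' hG'] := H _ _ f0 n0 (leqnn _).
  have [[a [b [nn eG]]] _ _] := hG'.
  by exists a, b; split=> //; rewrite -eG.
elim=> [|n IH] G fG nG hn; case: (classic (facet R E' S G)) => [h|h]; try by exists G.
- exfalso; apply: h; split=> // H fH nH sGH.
  apply/esym/eqP; rewrite eqEcard sGH /=.
  have sHS : H \subset S by case: fH => a [b [_ ->]]; apply/subsetP=> B; rewrite inE => /andP[].
  have sGS : G \subset S by case: fG => a [b [_ ->]]; apply/subsetP=> B; rewrite inE => /andP[].
  move: hn; rewrite leqn0 subn_eq0 => hn; exact: leq_trans (subset_leq_card sHS) hn.
- have [H [fH [nH [sGH nHG]]]] : exists H, face R E' S H /\ H != S /\ G \subset H /\ H <> G.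
    apply: NNPP => hn'; apply: h; split=> // H fH nH sGH.
    apply: NNPP => nHG; apply: hn'; by exists H.
  apply: (IH H fH nH).
  have sHS : H \subset S by case: fH => a [b [_ ->]]; apply/subsetP=> B; rewrite inE => /andP[].
  have : G \proper H by rewrite properEneq sGH andbT; apply/eqP=> e; apply: nHG.
  move/proper_card; have := subset_leq_card sHS; lia.
Qed.

Lemma sum_cst (x : R) (A : {set T}) : \sum_(e in A) x = x * #|A|%:R.
Proof. by rewrite sumr_const mulr_natr. Qed.

Definition xpair S (F : {set T}) (f : nat) (x y : T) : Prop :=
  exists2 B, B \in S & [/\ #|B :&: F| = f, x \in B, y \notin B,
     y |: (B :\ x) \in S & #|(y |: (B :\ x)) :&: F| = f].


Lemma facet_main (E' F : {set T}) S (f : nat) :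
  (forall B, B \in S -> B \subset E') ->
  (forall B1 B2, B1 \in S -> B2 \in S -> #|B1| = #|B2|) ->
  (forall B, B \in S -> (#|B :&: F| <= f)%N) ->
  (exists2 B, B \in S & #|B :&: F| = f) ->
  (exists2 B, B \in S & (#|B :&: F| < f)%N) ->
  (forall x y, x \in F -> y \in F -> rtc (xpair S F f) x y) ->
  (forall x y, x \in E' :\: F -> y \in E' :\: F -> rtc (xpair S F f) x y) ->
  @facet_defining T R E' S (fun e => - ((e \in F)%:R)) (f%:R).
Proof.
move=> sub eqc le [Bf Bfs Bff] [B0 B0s B0f] cF cG.
have val : forall B, B \in S ->
    aff E' (fun e : T => - ((e \in F)%:R : R)) f%:R (ind R B) = f%:R - #|B :&: F|%:R.
  by move=> B hB; rewrite aff_ind ?sub // sumrN sum_indF addrC.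
have nn : nonneg_on E' S (fun e : T => - ((e \in F)%:R : R)) f%:R.
  by move=> B hB; rewrite val // subr_ge0 ler_nat le.
have inG : forall B, (B \in zeroset E' S (fun e : T => - ((e \in F)%:R : R)) f%:R) =
    (B \in S) && (#|B :&: F| == f).
  move=> B; rewrite inE; case hB: (B \in S) => //=.
  by rewrite val // subr_eq0 eqr_nat eq_sym.
split=> //; split.
- by exists (fun e : T => - ((e \in F)%:R : R)), f%:R.
- apply/negP => /eqP e; move: B0s; rewrite -e inG => /andP[_ /eqP]; lia.
move=> H [a [b [nnH eH]]] nH sGH; rewrite eH in nH sGH *.
have l_eq : forall B, B \in S -> aff E' a b (ind R B) = \sum_(e in B) a e + b.
  by move=> B hB; rewrite aff_ind ?sub.
have zG : forall B, B \in S -> #|B :&: F| = f -> \sum_(e in B) a e + b = 0.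
  move=> B hB hf.
  have : B \in zeroset E' S a b by apply: (subsetP sGH); rewrite inG hB hf eqxx.
  by rewrite inE hB /= l_eq // => /eqP.
have pe : forall x y, xpair S F f x y -> a x = a y.
  move=> x y [B hB [hf xB yB hB' hf']].
  have := zG _ hB hf; have := zG _ hB' hf'.
  rewrite big_setU1 /=; last by rewrite !inE negb_and yB orbT.
  rewrite (big_setD1 x xB) /= => e1 e2.
  lra.
have rt : forall x y, rtc (xpair S F f) x y -> a x = a y.
  by move=> x y; elim=> // u v _ IH /pe <-.
have [al hal] : exists al, forall x, x \in F -> a x = al.
  case: (set_0Vmem F) => [->|[x0 x0F]]; first by exists 0 => x; rewrite inE.
  by exists (a x0) => x xF; apply: rt; apply: cF.
have [be hbe] : exists be, forall x, x \in E' :\: F -> a x = be.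
  case: (set_0Vmem (E' :\: F)) => [->|[x0 x0F]]; first by exists 0 => x; rewrite inE.
  by exists (a x0) => x xF; apply: rt; apply: cG.
set r := #|Bf|.
have lform : forall B, B \in S ->
    \sum_(e in B) a e + b = al * #|B :&: F|%:R + be * (r%:R - #|B :&: F|%:R) + b.
  move=> B hB; rewrite (big_setID F) /=.
  have s1 : \sum_(e in B :&: F) a e = \sum_(e in B :&: F) al.
    by apply: eq_bigr => e; rewrite inE => /andP[_ eF]; apply: hal.
  have s2 : \sum_(e in B :\: F) a e = \sum_(e in B :\: F) be.
    apply: eq_bigr => e; rewrite !inE => /andP[eF eB]; apply: hbe.
    by rewrite !inE eF (subsetP (sub B hB)).
  rewrite s1 s2.
  have hc : #|B :\: F|%:R = r%:R - #|B :&: F|%:R :> R.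
    have := cardsID F B; rewrite (eqc B Bf hB Bfs) -/r => h.
    by rewrite -h natrD addrC addKr.
  by rewrite !sum_cst hc.
have e1 := zG _ Bfs Bff; rewrite lform // Bff in e1.
apply/eqP; rewrite eqEsubset sGH andbT.
apply/subsetP=> B; rewrite inE => /andP[hB /eqP lB].
rewrite inG hB /=; apply/eqP; apply: NNPP => hne.
have hlt : (#|B :&: F| < f)%N by have := le B hB; lia.
apply: (negP nH); apply/eqP/setP => B'; rewrite inE.
case hB' : (B' \in S) => //=; apply/eqP.
rewrite l_eq // lform //.
rewrite l_eq // lform // in lB.
set c := #|B :&: F| in lB hlt hne.
have hab : al = be.
  have h0 : (al - be) * (f%:R - c%:R) = 0.
    have -> : (al - be) * (f%:R - c%:R) =
      (al * f%:R + be * (r%:R - f%:R) + b) - (al * c%:R + be * (r%:R - c%:R) + b) by ring.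
    by rewrite e1 lB subrr.
  move/eqP: h0; rewrite mulf_eq0 => /orP[|]; first by rewrite subr_eq0 => /eqP.
  by rewrite subr_eq0 eqr_nat => /eqP ef; rewrite ef in hlt; rewrite ltnn in hlt.
rewrite -hab.
have -> : forall u : R, al * u + al * (r%:R - u) + b = al * f%:R + al * (r%:R - f%:R) + b.
  by move=> u; ring.
by rewrite {2}hab e1.
Qed.

Lemma val_neg (E' B F : {set T}) (f : nat) : B \subset E' ->
  aff E' (fun e => - ((e \in F)%:R : R)) f%:R (ind R B) = f%:R - #|B :&: F|%:R.
Proof. by move=> sB; rewrite aff_ind // sumrN sum_indF addrC. Qed.

Lemma val_pos (E' B F : {set T}) : B \subset E' ->
  aff E' (fun e => ((e \in F)%:R : R)) 0 (ind R B) = #|B :&: F|%:R.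
Proof. by move=> sB; rewrite aff_ind // sum_indF addr0. Qed.

Lemma nvalues_const (E' : {set T}) S (a : T -> R) (b c : R) :
  (forall B, B \in S -> aff E' a b (ind R B) = c) -> (nvalues E' S a b <= 1)%N.
Proof.
move=> H; rewrite /nvalues.
have : (size (undup [seq aff E' a b (ind R B0) | B0 <- enum S]) <= size [:: c])%N.
  apply: uniq_leq_size; first exact: undup_uniq.
  by move=> v; rewrite mem_undup => /mapP[B + ->]; rewrite mem_enum => /H ->; rewrite inE.
by [].
Qed.

Lemma phi_inj (f : nat) : injective (fun v : R => f%:R - v).
Proof. by move=> u v /= h; apply: oppr_inj; apply: (addrI f%:R). Qed.

End Real.

End P2.
Import P2.

Module P3.
Set Implicit Arguments. Unset Strict Implicit. Unset Printing Implicit Defensive.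

Section Sets.
Variable T : finType.
Implicit Types (S : {set {set T}}) (A B C I J K F : {set T}).

Lemma setUIK I K F : I \subset F -> K :&: F = set0 -> (I :|: K) :&: F = I.
Proof.
move=> sI hK; apply/setP=> u; rewrite !inE.
have := subsetP sI u; have : u \in K :&: F = false by rewrite hK inE.
by rewrite inE; case: (u \in I); case: (u \in K); case: (u \in F) => //= _ ->.
Qed.

Lemma setUDK I K F : I \subset F -> K :&: F = set0 -> (I :|: K) :\: F = K.
Proof.
move=> sI hK; apply/setP=> u; rewrite !inE.
have := subsetP sI u; have : u \in K :&: F = false by rewrite hK inE.
by rewrite inE; case: (u \in I); case: (u \in K); case: (u \in F) => //= _ ->.
Qed.

Lemma swapUr I K x y : x \notin I -> y \notin I ->
  y |: ((I :|: K) :\ x) = I :|: (y |: (K :\ x)).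
Proof.
move=> xI yI; apply/setP=> u; rewrite !inE.
have [->|uy] := eqVneq u y; first by rewrite orbT.
have [->|ux] := eqVneq u x; first by rewrite (negbTE xI).
by [].
Qed.

Lemma swapUl I K x y : x \notin K -> y \notin K ->
  y |: ((I :|: K) :\ x) = (y |: (I :\ x)) :|: K.
Proof.
move=> xK yK; apply/setP=> u; rewrite !inE.
have [->|uy] := eqVneq u y; first by [].
have [->|ux] := eqVneq u x; first by rewrite (negbTE xK).
by [].
Qed.

Lemma swapDe B x y e : y != e -> y |: ((B :\ e) :\ x) = (y |: (B :\ x)) :\ e.
Proof.
move=> ye; apply/setP=> u; rewrite !inE.
have [->|uy] := eqVneq u y; first by rewrite ye.
by rewrite andbCA.
Qed.

Lemma exch_del S e : exch S -> exch [set B in S | e \notin B].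
Proof.
move=> hS B1 B2 x h1' h2' xD; move: h1' h2'; rewrite !inE => /andP[h1 e1] /andP[h2 e2].
have [y yD hy] := hS B1 B2 x h1 h2 xD.
exists y => //; rewrite !inE hy /= negb_or negb_and e1 orbT andbT.
by move: yD; rewrite inE => /andP[_ yB2]; apply/eqP=> ey; rewrite ey yB2 in e2.
Qed.

Lemma exch_con S e : exch S -> exch [set B :\ e | B in S & e \in B].
Proof.
move=> hS B1' B2' x /imsetP[B1 + ->] /imsetP[B2 + ->]; rewrite !inE.
move=> /andP[h1 e1] /andP[h2 e2] /andP[xB2 /andP[xe xB1]].
have xD : x \in B1 :\: B2.
  by rewrite inE xB1 andbT; move: xB2; rewrite xe.
have [y yD hy] := hS B1 B2 x h1 h2 xD.
move: yD; rewrite inE => /andP[yB1 yB2].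
have ye : y != e by apply/eqP=> ey; rewrite ey e1 in yB1.
exists y; first by rewrite !inE ye yB2 yB1.
rewrite swapDe //; apply/imsetP; exists (y |: (B1 :\ x)) => //.
by rewrite !inE hy /= e1 andbT; apply/orP; right; rewrite eq_sym.
Qed.

Lemma circ_del (D0 : {set T}) S C e : exch S -> (exists2 B1, B1 \in S & e \notin B1) ->
  circuit D0 S C -> e \notin C -> circuit (D0 :\ e) [set B in S | e \notin B] C.
Proof.
move=> hS [B1 h1 e1] [sC nC mC] eC; split.
- by apply/subsetP=> u uC; rewrite !inE (subsetP sC) // andbT; apply/eqP=> ue; rewrite -ue uC in eC.
- by move=> [B]; rewrite inE => /andP[hB _] sB; apply: nC; exists B.
move=> z zC; have hz := mC z zC.
have hB1 : indep S B1 by exists B1.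
have [I' [i1 i2 i3 i4]] := aug_star hS hz hB1.
exists I' => //; rewrite inE (indep_basis hS i1 h1 i4) /=.
apply/negP=> eI; have := subsetP i3 e eI; rewrite !inE (negbTE e1) orbF.
by case/andP=> _ eC'; rewrite eC' in eC.
Qed.

Lemma circ_con (D0 : {set T}) S C e : circuit D0 S C -> e \in C ->
  circuit (D0 :\ e) [set B :\ e | B in S & e \in B] (C :\ e).
Proof.
move=> [sC nC mC] eC; split.
- by apply/subsetP=> u; rewrite !inE => /andP[-> uC]; rewrite (subsetP sC).
- move=> [B' /imsetP[B + ->]]; rewrite inE => /andP[hB eB] sB; apply: nC.
  exists B => //; apply/subsetP=> u uC.
  have [->//|ue] := eqVneq u e.
  by have := subsetP sB u; rewrite !inE ue uC => /(_ isT) /andP[].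
move=> z; rewrite !inE => /andP[ze zC].
have [B hB sB] := mC z zC.
have eB : e \in B by apply: (subsetP sB); rewrite !inE eC eq_sym ze.
exists (B :\ e); first by apply/imsetP; exists B => //; rewrite inE hB eB.
apply/subsetP=> u; rewrite !inE => /andP[uz /andP[ue uC]].
by rewrite ue (subsetP sB) // !inE uz uC.
Qed.

End Sets.

End P3.
Import P3.

Module P4.
Set Implicit Arguments. Unset Strict Implicit. Unset Printing Implicit Defensive.

Section Mat.
Variable T : finType.
Variables (E F : {set T}) (Bs : {set {set T}}).
Hypothesis hBs0 : Bs != set0.
Hypothesis hsub : forall B, B \in Bs -> B \subset E.
Hypothesis hS : exch Bs.
Implicit Types (A B C I J K : {set T}).

Local Notation f := (rk Bs F).
Local Notation Rb := (restrict_bases Bs F).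
Local Notation Nb := (contract_bases Bs F).

Lemma rk_ge A B : B \in Bs -> #|A :&: B| <= rk Bs A.
Proof. by move=> hB; rewrite /rk; apply: (@leq_bigmax_cond _ _ (fun B => #|A :&: B|)). Qed.

Lemma rk_ex A : exists2 B, B \in Bs & #|A :&: B| = rk Bs A.
Proof.
have h0 : 0 < #|Bs| by rewrite card_gt0.
by have [B hB eB] := eq_bigmax_cond (fun B => #|A :&: B|) h0; exists B => //; apply/esym; exact: eB.
Qed.

Lemma rk_le_card A : rk Bs A <= #|A|.
Proof. by apply/bigmax_leqP => B _; apply: subset_leq_card; apply: subsetIl. Qed.

Lemma indep_rk I A : indep Bs I -> I \subset A -> #|I| <= rk Bs A.
Proof.
move=> [B hB sB] sA; apply: leq_trans (rk_ge A hB).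
by apply: subset_leq_card; rewrite subsetI sA sB.
Qed.

Lemma leF B : B \in Bs -> #|B :&: F| <= f.
Proof. by move=> hB; rewrite setIC; apply: rk_ge. Qed.

Lemma indep_sub I J : indep Bs J -> I \subset J -> indep Bs I.
Proof. by move=> [B hB sB] sI; exists B => //; apply: subset_trans sB. Qed.

Lemma inR I : I \in Rb -> [/\ indep Bs I, I \subset F & #|I| = f].
Proof.
case/imsetP=> B; rewrite inE => /andP[hB /eqP hc] ->; split => //.
- by exists B => //; apply: subsetIl.
- exact: subsetIr.
Qed.

Lemma R_of B : B \in Bs -> #|B :&: F| = f -> B :&: F \in Rb.
Proof. by move=> hB hc; apply/imsetP; exists B => //; rewrite inE hB hc eqxx. Qed.

Lemma N_of B : B \in Bs -> #|B :&: F| = f -> B :\: F \in Nb.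
Proof. by move=> hB hc; apply/imsetP; exists B => //; rewrite inE hB hc eqxx. Qed.

Lemma inN K : K \in Nb -> exists2 B, B \in Bs & #|B :&: F| = f /\ K = B :\: F.
Proof. by case/imsetP=> B; rewrite inE => /andP[hB /eqP hc] ->; exists B. Qed.

Lemma R_intro I : indep Bs I -> I \subset F -> f <= #|I| -> I \in Rb.
Proof.
move=> [B hB sB] sF le.
have sI : I \subset B :&: F by rewrite subsetI sB sF.
have := leF hB => le2.
have eI : I = B :&: F by apply/eqP; rewrite eqEcard sI /=; lia.
by rewrite eI; apply: R_of => //; rewrite -eI; have := subset_leq_card sI; lia.
Qed.

Lemma R_ex : exists I, I \in Rb.
Proof. by have [B hB hc] := rk_ex F; exists (B :&: F); apply: R_of; rewrite // setIC. Qed.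

Lemma N_disj K : K \in Nb -> K :&: F = set0.
Proof.
case/inN=> B _ [_ ->]; apply/setP=> u; rewrite !inE.
by case: (u \in F); rewrite ?andbF.
Qed.

Lemma N_sub K : K \in Nb -> K \subset E :\: F.
Proof.
case/inN=> B hB [_ ->]; apply/subsetP=> u; rewrite !inE => /andP[-> uB].
by rewrite (subsetP (hsub hB)).
Qed.

Lemma decomp I K : I \in Rb -> K \in Nb -> I :|: K \in Bs.
Proof.
move=> hI /inN[B hB [hc ->]].
have [iI sIF cI] := inR hI.
have iB : indep Bs B by exists B.
have [I' [i1 i2 i3 i4]] := aug_star hS iI iB.
have hI' := indep_basis hS i1 hB i4.
have eIF : I' :&: F = I.
  apply/esym/eqP; rewrite eqEcard subsetI i2 sIF /= cI.
  exact: leF.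
have sub1 : I' \subset I :|: (B :\: F).
  apply/subsetP=> u uI; have := subsetP i3 u uI; rewrite !inE.
  case/orP=> [->//|uB]; rewrite uB andbT.
  case uF: (u \in F); last by rewrite orbT.
  by rewrite -eIF inE uI uF.
suff -> : I :|: (B :\: F) = I' by [].
apply/esym/eqP; rewrite eqEcard sub1 /=.
have := cardsID F B; have := equicard hS hB hI'; rewrite cardsU.
lia.
Qed.

Lemma nF K u : K :&: F = set0 -> u \in K -> u \notin F.
Proof. move=> d uK; apply/negP=> uF; have : u \in K :&: F by rewrite inE uK uF.
by rewrite d inE. Qed.

Lemma exch_N : exch Nb.
Proof.
move=> K1 K2 x h1 h2 xD.
have [B1 hB1 [hc1 eK1]] := inN h1.
have hI0 := R_of hB1 hc1.
have [iI sIF cI] := inR hI0.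
have d1 := N_disj h1; have d2 := N_disj h2.
have b1 := decomp hI0 h1; have b2 := decomp hI0 h2.
move: xD; rewrite inE => /andP[xK2 xK1].
have xF := nF d1 xK1.
have xI : x \notin B1 :&: F by rewrite inE (negbTE xF) andbF.
have xD' : x \in ((B1 :&: F) :|: K1) :\: ((B1 :&: F) :|: K2).
  by rewrite !inE negb_or xK1 orbT andbT (negbTE xK2) andbT; move: xI; rewrite inE.
have [y yD hy] := hS b1 b2 xD'.
move: yD; rewrite !inE negb_or => /andP[/andP[yI yK1] yI2].
have yK2 : y \in K2 by move: yI2; rewrite (negbTE yI).
have yF := nF d2 yK2.
have yI' : y \notin B1 :&: F by rewrite inE.
rewrite swapUr // in hy.
have dK' : (y |: (K1 :\ x)) :&: F = set0.
  apply/setP=> u; rewrite !inE.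
  have [->|uy] := eqVneq u y; first by rewrite (negbTE yF) andbF.
  by case uK: (u \in K1); rewrite ?andbF //= (negbTE (nF d1 uK)) !andbF.
have sI0 : B1 :&: F \subset F by apply: subsetIr.
have hc' : #|((B1 :&: F) :|: (y |: (K1 :\ x))) :&: F| = f by rewrite setUIK.
have := N_of hy hc'; rewrite setUDK // => hN.
by exists y => //; rewrite inE yK1 yK2.
Qed.

Lemma exch_R : exch Rb.
Proof.
move=> I1 I2 x h1 h2 xD.
case/imsetP: (h1) => B1; rewrite inE => /andP[hB1 /eqP hc1] eI1.
have hK0 := N_of hB1 hc1.
have d0 := N_disj hK0.
have [_ sI1 cI1] := inR h1.
have [_ sI2 cI2] := inR h2.
have b1 := decomp h1 hK0; have b2 := decomp h2 hK0.
move: xD; rewrite inE => /andP[xI2 xI1].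
have xF : x \in F := subsetP sI1 x xI1.
have xK : x \notin B1 :\: F by rewrite inE xF.
have xD' : x \in (I1 :|: (B1 :\: F)) :\: (I2 :|: (B1 :\: F)).
  by rewrite !inE xF /= xI1 orbF andbT (negbTE xI2).
have [y yD hy] := hS b1 b2 xD'.
move: yD; rewrite !inE negb_or => /andP[/andP[yI1 yK] yI2].
move: yI2; rewrite (negbTE yK) orbF => yI2.
have yK' : y \notin B1 :\: F by rewrite inE.
rewrite swapUl // in hy.
have sI' : y |: (I1 :\ x) \subset F.
  apply/subsetP=> u; rewrite !inE => /orP[/eqP->|/andP[_ uI]]; last exact: subsetP sI1 u uI.
  exact: subsetP sI2 y yI2.
have hc' : #|((y |: (I1 :\ x)) :|: (B1 :\: F)) :&: F| = f.
  by rewrite setUIK // card_swap // cI1.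
have := R_of hy hc'; rewrite setUIK // => hR.
by exists y => //; rewrite inE yI1 yI2.
Qed.

Lemma nonloop e I : e \in E :\: F -> I \in Rb ->
  (forall e, e \in E :\: F -> f < rk Bs (e |: F)) -> indep Bs (e |: I).
Proof.
move=> eEF hI hflat.
have [iI sIF cI] := inR hI.
have [B' hB' hr] := rk_ex (e |: F).
have lt : #|I| < #|(e |: F) :&: B'| by rewrite hr cI; apply: hflat.
have iL : indep Bs ((e |: F) :&: B') by exists B' => //; apply: subsetIr.
have [z zD hz] := augment hS iI iL lt.
move: zD; rewrite !inE => /andP[zI /andP[/orP[/eqP ez|zF] _]]; first by rewrite -ez.
have sZ : z |: I \subset F.
  by apply/subsetP=> u; rewrite !inE => /orP[/eqP->//|/(subsetP sIF)].
exfalso; have := indep_rk hz sZ; rewrite cardsU1 zI cI /=; lia.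
Qed.

End Mat.

End P4.
Import P4.

Module P5.
Set Implicit Arguments. Unset Strict Implicit. Unset Printing Implicit Defensive.

Lemma cardI1 (T : finType) (B : {set T}) e : #|B :&: [set e]| = (e \in B).
Proof.
case eB: (e \in B).
  have -> : B :&: [set e] = [set e] by apply/setIidPr; rewrite sub1set.
  by rewrite cards1.
have -> : B :&: [set e] = set0.
  by apply/setP=> u; rewrite !inE; case: (u =P e) => [->|]; rewrite ?eB ?andbF.
by rewrite cards0.
Qed.

Section MatE.
Variable T : finType.
Variables (E F : {set T}) (Bs : {set {set T}}) (e : T).
Hypothesis hBs0 : Bs != set0.
Hypothesis hsub : forall B, B \in Bs -> B \subset E.
Hypothesis hS : exch Bs.
Hypothesis hflat : forall e, e \in E :\: F -> rk Bs F < rk Bs (e |: F).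
Hypothesis he : e \in E :\: F.
Implicit Types (A B C I J K : {set T}).

Local Notation f := (rk Bs F).
Local Notation Rb := (restrict_bases Bs F).
Local Notation Nb := (contract_bases Bs F).

Lemma eF : e \notin F.
Proof. by move: he; rewrite inE => /andP[]. Qed.

Lemma B0_ex : exists B0, B0 \in Bs.
Proof. by case/set0Pn: hBs0 => B hB; exists B. Qed.

Lemma ne4 : exists2 K, K \in Nb & e \in K.
Proof.
have [I0 hI0] := R_ex F hBs0.
have [iI sIF cI] := inR hI0.
have ie := nonloop hBs0 hS he hI0 hflat.
have [B0 hB0] := B0_ex.
have iB0 : indep Bs B0 by exists B0.
have [I' [i1 i2 i3 i4]] := aug_star hS ie iB0.
have hI' := indep_basis hS i1 hB0 i4.
have cF : #|I' :&: F| = f.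
  apply/eqP; rewrite eqn_leq leF //= -cI; apply: subset_leq_card.
  rewrite subsetI sIF andbT; apply: subset_trans i2; exact: subsetUr.
exists (I' :\: F); first exact: N_of.
by rewrite inE eF (subsetP i2) // !inE eqxx.
Qed.

Lemma withe : exists2 B, B \in Bs & e \in B.
Proof.
have [K hK eK] := ne4; have [B hB [_ eK']] := inN hK.
by exists B => //; move: eK; rewrite eK' inE => /andP[].
Qed.

Lemma con_exact B : B \in Bs ->
  exists2 B', B' \in Bs & e \in B' /\ #|B' :&: F| = #|B :&: F|.
Proof.
move=> hB.
have [I0 hI0] := R_ex F hBs0.
have [iI sIF cI] := inR hI0.
have iL : indep Bs (B :&: F) by exists B => //; apply: subsetIl.
have [I' [i1 i2 i3 i4]] := aug_star hS iL iI.
have sI'F : I' \subset F.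
  apply: (subset_trans i3); rewrite subUset sIF andbT; exact: subsetIr.
have hI' : I' \in Rb by apply: R_intro => //; rewrite -cI.
have ie := nonloop hBs0 hS he hI' hflat.
have ieL : indep Bs (e |: (B :&: F)).
  apply: indep_sub ie _; apply/subsetP=> u; rewrite !inE.
  case/orP=> [->//|uBF]; apply/orP; right; apply: (subsetP i2); by rewrite inE.
have iB : indep Bs B by exists B.
have [I'' [j1 j2 j3 j4]] := aug_star hS ieL iB.
have hI'' := indep_basis hS j1 hB j4.
exists I'' => //; split.
  by apply: (subsetP j2); rewrite !inE eqxx.
suff -> : I'' :&: F = B :&: F by [].
apply/eqP; rewrite eqEsubset; apply/andP; split.
  apply/subsetP=> u; rewrite inE => /andP[uI uF].
  have := subsetP j3 u uI; rewrite !inE uF !andbT.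
  case/orP=> [/orP[/eqP eu|->//]|->//].
  by move: eF; rewrite -eu uF.
apply/subsetP=> u uBF; rewrite inE (subsetP j2) ?(subsetP (subsetIr B F)) //.
by rewrite !inE; move: uBF; rewrite inE => /andP[-> ->]; rewrite orbT.
Qed.


Section Del.
Variable J : {set T}.
Hypothesis iJ : indep Bs J.
Hypothesis sJ : J \subset E :\: F.
Hypothesis cJ : #|J| = rk Bs (E :\: F).
Hypothesis eJ : e \notin J.

Lemma ne1 : exists2 B1, B1 \in Bs & e \notin B1.
Proof.
apply: NNPP => H.
have all_e : forall B, B \in Bs -> e \in B.
  move=> B hB; apply: NNPP => eB; apply: H; exists B => //; exact/negP.
have [B0 hB0] := B0_ex.
have iB0 : indep Bs B0 by exists B0.
have [I' [i1 i2 i3 i4]] := aug_star hS iJ iB0.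
have hI' := indep_basis hS i1 hB0 i4.
have ieJ : indep Bs (e |: J).
  apply: indep_sub (_ : indep Bs I') _; first by exists I'.
  apply/subsetP=> u; rewrite !inE => /orP[/eqP->|/(subsetP i2)//]; exact: all_e.
have sub : e |: J \subset E :\: F.
  by apply/subsetP=> u; rewrite !inE => /orP[/eqP->|/(subsetP sJ)]; [move: he; rewrite inE|rewrite inE].
have := indep_rk ieJ sub; rewrite cardsU1 eJ cJ /=; lia.
Qed.

Lemma del_low : exists2 B2, B2 \in Bs &
  e \notin B2 /\ forall B, B \in Bs -> #|B2 :&: F| <= #|B :&: F|.
Proof.
have [B1 h1 e1] := ne1.
have iB1 : indep Bs B1 by exists B1.
have [I' [i1 i2 i3 i4]] := aug_star hS iJ iB1.
have hI' := indep_basis hS i1 h1 i4.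
exists I' => //; split.
  apply/negP=> eI; have := subsetP i3 e eI; rewrite inE (negbTE eJ) /=.
  by rewrite (negbTE e1).
move=> B hB.
have c1 : #|B :\: F| <= #|J|.
  rewrite cJ; apply: indep_rk; first by exists B => //; apply: subsetDl.
  by apply/subsetP=> u; rewrite !inE => /andP[-> /(subsetP (hsub hB))].
have c2 : #|J| <= #|I' :\: F|.
  apply: subset_leq_card; apply/subsetP=> u uJ.
  have := subsetP sJ u uJ; rewrite !inE => /andP[-> _]; by rewrite (subsetP i2).
have := cardsID F B; have := cardsID F I'; have := equicard hS hI' hB; lia.
Qed.

Lemma ne3 : exists2 K, K \in Nb & e \notin K.
Proof.
have [B1 h1 e1] := ne1.
have [I0 hI0] := R_ex F hBs0.
have [iI sIF cI] := inR hI0.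
have iB1 : indep Bs B1 by exists B1.
have [I' [i1 i2 i3 i4]] := aug_star hS iI iB1.
have hI' := indep_basis hS i1 h1 i4.
have cF : #|I' :&: F| = f.
  apply/eqP; rewrite eqn_leq leF //= -cI; apply: subset_leq_card.
  by rewrite subsetI sIF i2.
exists (I' :\: F); first exact: N_of.
rewrite inE negb_and; apply/orP; right; apply/negP=> eI.
have := subsetP i3 e eI; rewrite inE (negbTE e1) orbF => /(subsetP sIF).
by rewrite (negbTE eF).
Qed.

Lemma minor_del :
  restrict_bases (contract_bases Bs set0) (E :\: (set0 :|: [set e])) =
  [set B in Bs | e \notin B].
Proof.
have [B1 h1 e1] := ne1.
have c0 : contract_bases Bs set0 = Bs.
  have r0 : rk Bs set0 = 0 by have := rk_le_card Bs (set0 : {set T}); rewrite cards0; lia.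
  apply/setP=> B; apply/imsetP/idP => [[B0 + ->]|hB].
    by rewrite inE setD0 => /andP[].
  by exists B; rewrite ?setD0 // inE hB setI0 cards0 r0.
rewrite c0 set0U.
have sE : forall B, B \in Bs -> e \notin B -> B :&: (E :\ e) = B.
  move=> B hB eB; apply/setIidPl/subsetP=> u uB; rewrite !inE (subsetP (hsub hB)) // andbT.
  by apply/eqP=> ue; rewrite ue in uB; rewrite uB in eB.
have rE : rk Bs (E :\ e) = #|B1|.
  apply/eqP; rewrite eqn_leq; apply/andP; split.
    apply/bigmax_leqP=> B hB; rewrite -(equicard hS hB h1).
    by apply: subset_leq_card; apply: subsetIr.
  by have := rk_ge (E :\ e) h1; rewrite setIC sE.
apply/setP=> B'; apply/imsetP/idP => [[B + ->]|].
  rewrite inE => /andP[hB /eqP hc].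
  have eB : B :&: (E :\ e) = B.
    apply/eqP; rewrite eqEcard subsetIl /= hc rE; rewrite (equicard hS hB h1) //.
  by rewrite eB inE hB /=; apply/negP=> eB'; move: eB'; rewrite -eB !inE eqxx /= andbF.
rewrite inE => /andP[hB eB]; exists B'; last by rewrite sE.
by rewrite inE hB /= sE // rE (equicard hS hB h1).
Qed.

End Del.

Lemma minor_con :
  restrict_bases (contract_bases Bs [set e]) (E :\: ([set e] :|: set0)) =
  [set B :\ e | B in Bs & e \in B].
Proof.
have [B1 h1 e1] := withe.
have r1 : rk Bs [set e] = 1.
  apply/eqP; rewrite eqn_leq; apply/andP; split.
    by have := rk_le_card Bs [set e]; rewrite cards1.
  by have := rk_ge [set e] h1; rewrite setIC cardI1 e1.
have c1 : contract_bases Bs [set e] = [set B :\ e | B in Bs & e \in B].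
  apply/setP=> K; apply/imsetP/imsetP => [][B + ->]; rewrite !inE => /andP[hB hc];
    exists B => //; rewrite inE hB /=.
    by move: hc; rewrite cardI1 r1; case: (e \in B).
  by rewrite cardI1 r1 hc.
rewrite c1 setU0.
set Sc := [set B :\ e | B in Bs & e \in B].
have cK : forall K, K \in Sc -> #|K| = (#|B1| - 1)%N /\ K \subset E :\ e.
  move=> K /imsetP[B + ->]; rewrite inE => /andP[hB eB]; split.
    by have := equicard hS hB h1; rewrite (cardsD1 e B) eB; lia.
  by apply/subsetP=> u; rewrite !inE => /andP[-> /(subsetP (hsub hB))].
have rE : rk Sc (E :\ e) = (#|B1| - 1)%N.
  have hB1 : B1 :\ e \in Sc by apply/imsetP; exists B1; rewrite // inE h1 e1.
  apply/eqP; rewrite eqn_leq; apply/andP; split.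
    apply/bigmax_leqP=> K hK; have [<- _] := cK K hK.
    by apply: subset_leq_card; apply: subsetIr.
  have [cB1 sB1] := cK _ hB1.
  have := rk_ge (Bs := Sc) (E :\ e) hB1; rewrite (setIidPr sB1) cB1 //.
apply/setP=> K'; apply/imsetP/idP => [[K + ->]|hK'].
  rewrite inE => /andP[hK _]; have [_ sK] := cK K hK.
  by rewrite (setIidPl sK).
have [cK' sK'] := cK K' hK'.
exists K'; last by rewrite (setIidPl sK').
by rewrite inE hK' /= (setIidPl sK') cK' rE.
Qed.

End MatE.

End P5.
Import P5.

Module P6.
Set Implicit Arguments. Unset Strict Implicit. Unset Printing Implicit Defensive.

Section Fin.
Variable R : realType.
Variable T : finType.
Variables (E F : {set T}) (Bs : {set {set T}}) (e : T) (k j : nat).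
Hypothesis hBs0 : Bs != set0.
Hypothesis hsub : forall B, B \in Bs -> B \subset E.
Hypothesis hS : exch Bs.
Hypothesis hRc : connected F (restrict_bases Bs F).
Hypothesis hlev : nvalues E Bs (fun e => ((e \in F)%:R : R)%R) 0%R = k.
Variables (S' N' : {set {set T}}).
Hypothesis h1 : forall B, B \in S' -> B \subset E :\ e.
Hypothesis h2 : exch S'.
Hypothesis h3 : forall B, B \in S' -> #|B :&: F| <= rk Bs F.
Hypothesis h4 : forall I K, I \in restrict_bases Bs F -> K \in N' -> I :|: K \in S'.
Hypothesis h5 : forall K, K \in N' -> K :&: F = set0.
Hypothesis h6 : exists K, K \in N'.
Hypothesis h7 : exch N'.
Hypothesis h9 : forall x y, x \in (E :\ e) :\: F -> y \in (E :\ e) :\: F ->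
  rtc (fun u v => exists C, circuit ((E :\: F) :\ e) N' C /\ u \in C /\ v \in C) x y.
Hypothesis h10 : forall B, B \in Bs -> exists2 B', B' \in S' & #|B' :&: F| = #|B :&: F|.
Hypothesis hj : j < k.
Hypothesis hat : at_most_level R (E :\ e) S' j.

Local Notation f := (rk Bs F).
Local Notation Rb := (restrict_bases Bs F).

Lemma xpR I K x y : I \in Rb -> K \in N' -> x \in I -> y \notin I -> y \in F ->
  y |: (I :\ x) \in Rb -> xpair S' F f x y.
Proof.
move=> hI hK xI yI yF hI'.
have [_ sIF cI] := inR hI.
have [_ sI'F cI'] := inR hI'.
have d := h5 hK.
have xK : x \notin K by apply/negP=> xK; move: (nF d xK); rewrite (subsetP sIF x xI).
have yK : y \notin K by apply/negP=> yK; move: (nF d yK); rewrite yF.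
exists (I :|: K); first exact: h4.
split.
- by rewrite setUIK.
- by rewrite inE xI.
- by rewrite inE negb_or yI yK.
- by rewrite swapUl //; apply: h4.
- by rewrite swapUl // setUIK.
Qed.

Lemma xpN I K x y : I \in Rb -> K \in N' -> x \in K -> y \notin K -> y \notin F ->
  y |: (K :\ x) \in N' -> xpair S' F f x y.
Proof.
move=> hI hK xK yK yF hK'.
have [_ sIF cI] := inR hI.
have d := h5 hK.
have xI : x \notin I by apply/negP=> xI; move: (nF d xK); rewrite (subsetP sIF).
have yI : y \notin I by apply/negP=> yI; move: yF; rewrite (subsetP sIF).
exists (I :|: K); first exact: h4.
split.
- by rewrite setUIK.
- by rewrite inE xK orbT.
- by rewrite inE negb_or yI yK.
- by rewrite swapUr //; apply: h4.
- by rewrite swapUr // setUIK // h5.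
Qed.

Lemma finish : False.
Proof.
have [I0 hI0] := R_ex F hBs0.
have [K0 hK0] := h6.
have hS'0 : S' != set0 by apply/set0Pn; exists (I0 :|: K0); exact: h4.
move: hj hat; case: j => [|j'] hj' hat'.
  have [a [b hab]] := facet_exists R (E :\ e) hS'0.
  have := hat' a b hab; have := nvalues_gt0 (E :\ e) a b hS'0; lia.
have [B0 hB0 nB0] : exists2 B, B \in Bs & #|B :&: F| != f.
  apply: NNPP => H.
  have : (nvalues E Bs (fun e => ((e \in F)%:R : R)%R) 0%R <= 1)%N.
    apply: (@nvalues_const R T E Bs _ _ (f%:R)%R) => B hB.
    rewrite val_pos ?hsub //; congr (_%:R)%R.
    apply/eqP; apply: negbNE; apply/negP => nq; apply: H; by exists B.
  rewrite hlev; lia.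
have [B0' hB0' eB0] := h10 hB0.
have lt0 : #|B0' :&: F| < f by rewrite eB0 ltn_neqAle nB0 leF.
have [_ sI0 cI0] := inR hI0.
have Bf : exists2 B, B \in S' & #|B :&: F| = f.
  by exists (I0 :|: K0); [exact: h4 | rewrite setUIK // h5].
have B0x : exists2 B, B \in S' & #|B :&: F| < f by exists B0'.
have eqc : forall B1 B2, B1 \in S' -> B2 \in S' -> #|B1| = #|B2|.
  by move=> B1 B2 hB1 hB2; apply: equicard h2 hB1 hB2.
have cF : forall x y, x \in F -> y \in F -> rtc (xpair S' F f) x y.
  move=> x y xF yF; have [<-|xy] := eqVneq x y; first exact: rtc_refl.
  have [C [hC [xC yC]]] := hRc xF yF xy.
  have [I hI [xI yI hI']] := circuit_exch (exch_R hBs0 hS) hC xC yC xy.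
  by apply: rtc1; apply: (xpR hI hK0 xI yI yF hI').
have cG : forall x y, x \in (E :\ e) :\: F -> y \in (E :\ e) :\: F -> rtc (xpair S' F f) x y.
  move=> x y hx hy; apply: rtc_map (h9 hx hy) => u v [C [hC [uC vC]]] uv.
  have [K hK [uK vK hK']] := circuit_exch h7 hC uC vC uv.
  have vF : v \notin F.
    by case: hC => sC _ _; move: (subsetP sC v vC); rewrite !inE => /andP[_ /andP[]].
  exact: (xpN hI0 hK uK vK vF hK').
have hfd := facet_main R h1 eqc h3 Bf B0x cF cG.
have := hat' _ _ hfd.
have : k <= nvalues (E :\ e) S' (fun e => - ((e \in F)%:R : R))%R (f%:R)%R.
  have H10' : forall B1, B1 \in Bs -> exists2 B2, B2 \in S' &
    aff (E :\ e) (fun e => - ((e \in F)%:R : R))%R (f%:R)%R (ind R B2) =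
    (fun v => f%:R - v)%R (aff E (fun e => ((e \in F)%:R : R)%R) 0%R (ind R B1)).
    move=> B hB; have [B' hB' eB'] := h10 hB; exists B' => //.
    by rewrite val_neg ?h1 // val_pos ?hsub // eB'.
  rewrite -hlev; exact: (nvalues_le (@phi_inj R f) H10').
move=> H1 H2; have := leq_trans H1 H2; rewrite leqNgt hj'.
by [].
Qed.

End Fin.

End P6.
Import P6.

Unset Implicit Arguments.

Theorem proposition6p4 (R : realType) (T : finType) (E : {set T})
    (Bs : {set {set T}}) (k : nat) (F : {set T}) :
  is_matroid E Bs ->
  minimally_level R E Bs k ->
  flacet E Bs F ->
  flacet_level R E Bs F k ->
  rk Bs (E :\: F) = #|E :\: F|.
Proof.
move=> [hBs0 hsub hS] [_ hmin] [[hFE hflat] _ _ hRc hNc] hlev.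
apply/eqP; rewrite eqn_leq rk_le_card /= leqNgt; apply/negP => hlt.
have [Bg hBg cg] := rk_ex hBs0 (E :\: F).
have iJ : indep Bs ((E :\: F) :&: Bg) by exists Bg => //; apply: subsetIr.
have sJ : (E :\: F) :&: Bg \subset E :\: F by apply: subsetIl.
have [e he eJ] : exists2 e, e \in E :\: F & e \notin (E :\: F) :&: Bg.
  apply/subsetPn; apply/negP => sub; have := subset_leq_card sub; rewrite cg; lia.
have eE : e \in E by move: he; rewrite inE => /andP[].
have eF : e \notin F by move: he; rewrite inE => /andP[].
have exN := exch_N hBs0 hS (F := F).
have [K3 hK3 eK3] := ne3 hBs0 hS he iJ sJ cg eJ.
have [K4 hK4 eK4] := ne4 hBs0 hS hflat he.
set Nb := contract_bases Bs F in hK3 hK4 exN hNc.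
set Nd := [set K in Nb | e \notin K].
set Ncn := [set K :\ e | K in Nb & e \in K].
set D := (E :\: F) :\ e.
have tut := @tutte _ D (fun u v => exists C, circuit D Nd C /\ u \in C /\ v \in C)
  (fun u v => exists C, circuit D Ncn C /\ u \in C /\ v \in C).
case: tut.
- by move=> u v [C [hC [uC vC]]]; exists C.
- by move=> u v [C [hC [uC vC]]]; exists C.
- move=> u v uD vD uv.
  have uE : u \in E :\: F by move: uD; rewrite inE => /andP[].
  have vE : v \in E :\: F by move: vD; rewrite inE => /andP[].
  have [C [hC [uC vC]]] := hNc u v uE vE uv.
  case eC: (e \in C).
    right; exists (C :\ e); split; first exact: circ_con.
    by move: uD vD; rewrite !inE => /andP[-> _] /andP[-> _]; rewrite uC vC.
  left; exists C; split => //.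
  apply: circ_del => //; [by exists K3 | by rewrite eC].
-
  move=> hc.
  have sC : [set e] \subset E by rewrite sub1set.
  have dC : [disjoint [set e] & (set0 : {set T})] by rewrite -setI_eq0 setI0.
  have nC : [set e] :|: set0 != set0 by rewrite setU0; apply/set0Pn; exists e; rewrite inE.
  have [j hj [hat _]] := hmin [set e] set0 sC (sub0set _) dC nC.
  rewrite (minor_con hBs0 hsub hS hflat he) setU0 in hat.
  set Sc := [set B :\ e | B in Bs & e \in B] in hat.
  apply: (finish hBs0 hsub hS hRc hlev (S' := Sc) (N' := Ncn) _ _ _ _ _ _ _ _ _ hj hat).
  + move=> B /imsetP[B0 + ->]; rewrite inE => /andP[hB0 _].
    by apply/subsetP=> u; rewrite !inE => /andP[-> /(subsetP (hsub _ hB0))].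
  + exact: exch_con hS.
  + move=> B /imsetP[B0 + ->]; rewrite inE => /andP[hB0 _].
    apply: leq_trans (leF F hB0); apply: subset_leq_card; apply: setSI; apply: subsetDl.
  + move=> I K hI /imsetP[K0 + ->]; rewrite inE => /andP[hK0 eK0].
    have [_ sIF _] := inR hI.
    have eI : e \notin I by apply/negP=> eI; move: eF; rewrite (subsetP sIF e eI).
    have -> : I :|: (K0 :\ e) = (I :|: K0) :\ e.
      apply/setP=> u; rewrite !inE.
      by have [->|ue] := eqVneq u e; [rewrite (negbTE eI) | by []].
    apply/imsetP; exists (I :|: K0) => //.
    by rewrite inE (decomp hBs0 hS hI hK0) /= inE eK0 orbT.
  + move=> K /imsetP[K0 + ->]; rewrite inE => /andP[hK0 _].
    apply/eqP; rewrite -subset0 -(N_disj hK0); apply: setSI; apply: subsetDl.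
  + by exists (K4 :\ e); apply/imsetP; exists K4 => //; rewrite inE hK4 eK4.
  + exact: exch_con exN.
  + move=> x y hx hy; apply: hc.
      by move: hx; rewrite /D !inE => /andP[-> /andP[-> ->]].
    by move: hy; rewrite /D !inE => /andP[-> /andP[-> ->]].
  + move=> B hB; have [B' hB' [eB' cB']] := con_exact hBs0 hS hflat he hB.
    exists (B' :\ e); first by apply/imsetP; exists B' => //; rewrite inE hB' eB'.
    rewrite -cB'; suff -> : (B' :\ e) :&: F = B' :&: F by [].
    apply/setP=> u; rewrite !inE.
    by have [->|ue] := eqVneq u e; [rewrite (negbTE eF) !andbF | by []].
-
  move=> hd.
  have sD : [set e] \subset E by rewrite sub1set.
  have dD : [disjoint (set0 : {set T}) & [set e]] by rewrite -setI_eq0 set0I.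
  have nD : set0 :|: [set e] != set0 by rewrite set0U; apply/set0Pn; exists e; rewrite inE.
  have [j hj [hat _]] := hmin set0 [set e] (sub0set _) sD dD nD.
  rewrite (minor_del hBs0 hsub hS he iJ sJ cg eJ) set0U in hat.
  set Sd := [set B in Bs | e \notin B] in hat.
  have [I0 hI0] := R_ex F hBs0.
  have [_ sIF cI0] := inR hI0.
  have eI : forall I, I \in restrict_bases Bs F -> e \notin I.
    by move=> I hI; have [_ sI _] := inR hI; apply/negP=> eI; move: eF; rewrite (subsetP sI e eI).
  have h4 : forall I K, I \in restrict_bases Bs F -> K \in Nd -> I :|: K \in Sd.
    move=> I K hI; rewrite inE => /andP[hK eK].
    by rewrite inE (decomp hBs0 hS hI hK) /= inE negb_or eK andbT eI.
  apply: (finish hBs0 hsub hS hRc hlev (S' := Sd) (N' := Nd) _ _ _ h4 _ _ _ _ _ hj hat).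
  + move=> B; rewrite inE => /andP[hB eB]; apply/subsetP=> u uB.
    rewrite !inE (subsetP (hsub _ hB)) // andbT.
    by apply/eqP=> ue; move: eB; rewrite -ue uB.
  + exact: exch_del hS.
  + by move=> B; rewrite inE => /andP[hB _]; exact: leF.
  + by move=> K; rewrite inE => /andP[hK _]; exact: N_disj hK.
  + by exists K3; rewrite inE hK3 eK3.
  + exact: exch_del exN.
  + move=> x y hx hy; apply: hd.
      by move: hx; rewrite /D !inE => /andP[-> /andP[-> ->]].
    by move: hy; rewrite /D !inE => /andP[-> /andP[-> ->]].
  + move=> B hB.
    have [B2 hB2 [eB2 low]] := del_low hBs0 hsub hS he iJ sJ cg eJ.
    have hK3' : K3 \in Nd by rewrite inE hK3 eK3.
    have hhi := h4 _ _ hI0 hK3'.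
    have chi : #|(I0 :|: K3) :&: F| = rk Bs F by rewrite setUIK // (N_disj hK3).
    have hB2' : B2 \in Sd by rewrite inE hB2 eB2.
    apply: (exch_ival (exch_del (e:=e) hS) hB2' hhi).
    by rewrite low // chi leF.
Qed.
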